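(* Let $N\ge 1$ and let $\mathcal{M}_N$ be the set of real symmetric $2N\times 2N$ matrices $\mathbf{V}$ with $\mathbf{V}+\tfrac{i}{2}\mathbf{\Omega}>0$. For $\mathbf{V}\in\mathcal{M}_N$ and real symmetric $2N\times 2N$ matrices $\mathbf{A},\mathbf{B}$ define $$G_{\mathbf{V}}(\mathbf{A},\mathbf{B})=\int_{-1}^{1}d\lambda\;\mathrm{Tr}\Big[\mathbf{B}\,\big(2\mathbf{V}+i\lambda\mathbf{\Omega}\big)^{-1}\mathbf{A}\,\big(2\mathbf{V}+i\lambda\mathbf{\Omega}\big)^{-1}\Big].$$ Then for every real symplectic $2N\times 2N$ matrix $\mathbf{S}$ (i.e. $\mathbf{S}\mathbf{\Omega}\mathbf{S}^T=\mathbf{\Omega}$), every $\mathbf{V}\in\mathcal{M}_N$ and all real symmetric $\mathbf{A},\mathbf{B}$, $$G_{\mathbf{S}\mathbf{V}\mathbf{S}^T}\big(\mathbf{S}\mathbf{A}\mathbf{S}^T,\mathbf{S}\mathbf{B}\mathbf{S}^T\big)=G_{\mathbf{V}}(\mathbf{A},\mathbf{B}).$$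
   Context: $\mathbf{\Omega}$ is the $2N\times 2N$ symplectic form $\mathbf{\Omega}=\begin{pmatrix}0&\mathbb{I}_N\\-\mathbb{I}_N&0\end{pmatrix}$. The set $\mathcal{M}_N$ parametrizes (via covariance matrices) the faithful, zero-displacement $N$-mode bosonic Gaussian states, and is an open subset of the space of real symmetric $2N\times 2N$ matrices, whose tangent space at each point is identified with the real symmetric $2N\times2N$ matrices. $G_{\mathbf{V}}$ is the Kubo-Mori-Bogoliubov (KMB) metric on this manifold (the negative Hessian of the quantum relative entropy between Gaussian states, written in covariance-matrix coordinates). *)

(* Defs.v *)
From HB Require Import structures.
From mathcomp Require Import all_boot all_order all_algebra.
From mathcomp Require Import all_classical all_reals all_analysis.
From mathcomp Require Import complex.
Set Implicit Arguments. Unset Strict Implicit. Unset Printing Implicit Defensive.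
Import Order.TTheory GRing.Theory Num.Theory.
Import numFieldNormedType.Exports.
Local Open Scope ring_scope.
Local Open Scope complex_scope.

Definition Omega (R : pzRingType) (N : nat) : 'M[R]_(N + N) :=
  block_mx 0 1%:M (- 1%:M) 0.

Definition symplectic (R : pzRingType) (N : nat) (S : 'M[R]_(N + N)) : Prop :=
  S *m Omega R N *m S^T = Omega R N.

Definition cmx (R : rcfType) (m n : nat) (A : 'M[R]_(m, n)) : 'M[R[i]]_(m, n) :=
  map_mx (fun x => x%:C) A.

Definition adjmx (R : rcfType) (m n : nat) (A : 'M[R[i]]_(m, n)) : 'M[R[i]]_(n, m) :=
  (map_mx (@conjc R) A)^T.

(* Positive definiteness of a complex (Hermitian) matrix: z^* M z > 0 for z <> 0
   (the order on R[i] forces z^* M z to be real). *)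
Definition posdef (R : rcfType) (n : nat) (M : 'M[R[i]]_n) : Prop :=
  forall z : 'cV[R[i]]_n, z != 0 -> 0 < (adjmx z *m M *m z) 0 0.

Definition symmx (R : pzRingType) (n : nat) (A : 'M[R]_n) : Prop := A^T = A.

Definition in_MN (R : rcfType) (N : nat) (V : 'M[R]_(N + N)) : Prop :=
  symmx V /\ posdef (cmx V + ('i / 2%:R) *: cmx (Omega R N)).

Definition KMB_integrand (R : rcfType) (N : nat) (V A B : 'M[R]_(N + N)) (l : R) : R[i] :=
  let M := 2%:R *: cmx V + ('i * l%:C) *: cmx (Omega R N) in
  \tr (cmx B *m invmx M *m cmx A *m invmx M).

Definition KMB (R : realType) (N : nat) (V A B : 'M[R]_(N + N)) : R[i] :=
  (\int[lebesgue_measure]_(l in `[-1%R, 1%R]%classic : set R) @complex.Re R (KMB_integrand V A B l))%:C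
  + 'i * (\int[lebesgue_measure]_(l in `[-1%R, 1%R]%classic : set R) @complex.Im R (KMB_integrand V A B l))%:C.

(* Main.v *)
Require Import Defs.
From HB Require Import structures.
From mathcomp Require Import all_boot all_order all_algebra.
From mathcomp Require Import all_classical all_reals all_analysis.
From mathcomp Require Import complex.
From mathcomp Require Import ring lra.
Set Implicit Arguments. Unset Strict Implicit.
Import Order.TTheory GRing.Theory Num.Theory.
Local Open Scope ring_scope.

Lemma tr_conj (F : comUnitRingType) n (P B Y A : 'M[F]_n) :
  P \in unitmx -> P^T \in unitmx ->
  \tr (P *m B *m P^T *m (invmx P^T *m Y *m invmx P) *m (P *m A *m P^T)
       *m (invmx P^T *m Y *m invmx P)) = \tr (B *m Y *m A *m Y).
Proof.
move=> uP uPT.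
rewrite !mulmxA !mulmxK // !mulmxKV //.
by rewrite mxtrace_mulC !mulmxA mulVmx // mul1mx.
Qed.

Lemma invmx_conj (F : comUnitRingType) n (P M : 'M[F]_n) :
  P \in unitmx -> M \in unitmx -> P^T \in unitmx ->
  invmx (P *m M *m P^T) = invmx P^T *m invmx M *m invmx P.
Proof.
move=> uP uM uPT.
have uM' : P *m M *m P^T \in unitmx by rewrite !unitmx_mul uP uM uPT.
have e : (P *m M *m P^T) *m (invmx P^T *m invmx M *m invmx P) = 1%:M.
  by rewrite !mulmxA mulmxK // -(mulmxA P) mulmxV // mulmx1 mulmxV.
by rewrite -[RHS](mulKmx uM') e mulmx1.
Qed.

Section H.
Variable R : rcfType.

Lemma cmxE m n (A : 'M[R]_(m, n)) : cmx A = map_mx (real_complex R) A.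
Proof. by []. Qed.

Lemma Omega_sq N : Omega R N *m Omega R N = - 1%:M.
Proof.
rewrite /Omega mulmx_block !mulmx0 !mul0mx !mulmx1 !mul1mx !add0r !addr0.
rewrite (scalar_mx_block N N 1) opp_block_mx.
by congr block_mx; apply/matrixP => i j; rewrite !mxE; apply/esym/oppr0.
Qed.

Lemma Omega_unit N : Omega R N \in unitmx.
Proof.
have h : Omega R N *m (- Omega R N) = 1%:M.
  by rewrite mulmxN Omega_sq opprK.
by case: (mulmx1_unit h).
Qed.

Lemma conjc_pos (w : R[i]) : 0 < w -> w^*%C = w.
Proof. by case: w => a b; rewrite ltcE /= => /andP[/eqP hb _]; apply/eqP; rewrite eq_complex /=  hb oppr0 !eqxx. Qed.

Lemma conjc_i : ('i%C : R[i])^*%C = - 'i%C.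
Proof. by apply/eqP; rewrite eq_complex /= oppr0 !eqxx. Qed.

Definition cj m n (A : 'M[R[i]]_(m, n)) := map_mx (@conjc R) A.

Lemma cjK m n (A : 'M[R[i]]_(m, n)) : cj (cj A) = A.
Proof. by apply/matrixP => i j; rewrite !mxE conjcK. Qed.

Lemma cj_cmx m n (A : 'M[R]_(m, n)) : cj (cmx A) = cmx A.
Proof. by apply/matrixP => i j; rewrite !mxE conjc_real. Qed.

Lemma adjmxK m n (A : 'M[R[i]]_(m, n)) : adjmx (adjmx A) = A.
Proof. by apply/matrixP => i j; rewrite !mxE conjcK. Qed.

Definition qf n (X : 'M[R[i]]_n) (z : 'cV[R[i]]_n) := (adjmx z *m X *m z) 0 0.

Lemma qfD n (X Y : 'M[R[i]]_n) a z : qf (X + a *: Y) z = qf X z + a * qf Y z.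
Proof.
by rewrite /qf mulmxDr mulmxDl -scalemxAr -scalemxAl !mxE.
Qed.

Lemma qf_conj n (X : 'M[R]_n) z : (qf (cmx X) z)^*%C = qf (cmx X) (cj z).
Proof.
have -> : (qf (cmx X) z)^*%C = (cj (adjmx z *m cmx X *m z)) 0 0 by rewrite mxE.
rewrite /cj !map_mxM -/(cj (cmx X)) cj_cmx.
by rewrite /qf /adjmx -map_trmx.
Qed.


Lemma conjcM' (x y : R[i]) : (x * y)^*%C = x^*%C * y^*%C.
Proof. exact: rmorphM. Qed.
Lemma conjcD' (x y : R[i]) : (x + y)^*%C = x^*%C + y^*%C.
Proof. exact: rmorphD. Qed.

Lemma qfZ n (X : 'M[R[i]]_n) a z : qf (a *: X) z = a * qf X z.
Proof. by rewrite /qf -scalemxAr -scalemxAl !mxE. Qed.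

Lemma pos_add (x y : R[i]) : 0 < x -> 0 <= y -> 0 < x + y.
Proof. by move=> hx hy; apply: (lt_le_trans hx); rewrite lerDl. Qed.

Lemma ltc0R (x : R) : (0 < x%:C%C) = (0 < x).
Proof. by rewrite ltcE /= eqxx. Qed.

Lemma adjmx0 m n : adjmx (0 : 'M[R[i]]_(m, n)) = 0.
Proof. by apply/matrixP => i j; rewrite !mxE conjc0. Qed.

Definition Mlam N (V : 'M[R]_(N + N)) (l : R) : 'M[R[i]]_(N + N) :=
  2%:R *: cmx V + ('i%C * l%:C%C) *: cmx (Omega R N).

Lemma Mlam_pos N (V : 'M[R]_(N + N)) l : in_MN V -> -1 <= l -> l <= 1 ->
  forall z, z != 0 -> 0 < qf (Mlam V l) z.
Proof.
move=> [_ hV] hl1 hl2 z z0.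
set c : R[i] := 'i%C / 2%:R.
set pv := qf (cmx V) z; set po := qf (cmx (Omega R N)) z.
have h1 : 0 < pv + c * po by rewrite -qfD; apply: hV.
have h2 : 0 < pv - c * po.
  have z'0 : cj z != 0.
    apply: contra z0 => /eqP e; apply/eqP; rewrite -(cjK z) e.
    by apply/matrixP => i j; rewrite !mxE conjc0.
  have := hV _ z'0; rewrite -/(qf _ (cj z)) qfD -!qf_conj -/pv -/po => h.
  have e := conjc_pos h; rewrite conjcD' conjcM' !conjcK in e.
  have ec : ('i%C / 2%:R : R[i])^*%C = - c.
    by rewrite conjcM' conjc_i conjc_inv conjc_nat mulNr.
  have -> : pv - c * po = pv + ('i%C / 2%:R : R[i])^*%C * po by rewrite ec mulNr.
  by rewrite e.
have e2 : 'i%C = 2%:R * c by rewrite /c mulrC divfK // pnatr_eq0.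
rewrite /Mlam qfD qfZ -/pv -/po e2.
have -> : 2%:R * pv + 2%:R * c * l%:C%C * po =
   (1 + l)%:C%C * (pv + c * po) + (1 - l)%:C%C * (pv - c * po).
  rewrite rmorphD rmorphB rmorph1 /=; ring.
have s0 : 0 <= (1 + l)%:C%C by rewrite ler0c; lra.
have t0 : 0 <= (1 - l)%:C%C by rewrite ler0c; lra.
case: (ltrP l 1) => hl.
  rewrite addrC; apply: pos_add; last by apply: mulr_ge0 => //; apply: ltW.
  by apply: mulr_gt0 => //; rewrite ltc0R subr_gt0.
apply: pos_add; last by apply: mulr_ge0 => //; apply: ltW.
by apply: mulr_gt0 => //; rewrite ltc0R; lra.
Qed.

Lemma Mlam_unit N (V : 'M[R]_(N + N)) l : in_MN V -> -1 <= l -> l <= 1 ->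
  Mlam V l \in unitmx.
Proof.
move=> hV hl1 hl2; have pos := Mlam_pos hV hl1 hl2.
case uM: (Mlam V l \in unitmx) => //.
move: uM; rewrite unitmxE unitfE => /negbFE /det0P [v v0 vM].
have zn : adjmx v != 0.
  apply: contra v0 => /eqP z0; apply/eqP; rewrite -(adjmxK v) z0.
  exact: adjmx0.
by have := pos _ zn; rewrite /qf adjmxK vM mul0mx mxE ltxx.
Qed.

Lemma integrand_eq N (S V A B : 'M[R]_(N + N)) l :
  symplectic S -> in_MN V -> -1 <= l -> l <= 1 ->
  KMB_integrand (S *m V *m S^T) (S *m A *m S^T) (S *m B *m S^T) l =
  KMB_integrand V A B l.
Proof.
move=> hS hV hl1 hl2.
rewrite /KMB_integrand /=.
rewrite -[2%:R *: cmx (S *m V *m S^T) + _]/(Mlam (S *m V *m S^T) l).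
rewrite -[2%:R *: cmx V + _]/(Mlam V l).
set P := cmx S.
have uS : S \in unitmx.
  by have := Omega_unit N; rewrite -{1}hS !unitmx_mul => /andP[/andP[]].
have uP : P \in unitmx by rewrite /P cmxE map_unitmx.
have uPT : P^T \in unitmx by rewrite unitmx_tr.
have uM := Mlam_unit hV hl1 hl2.
have cE : forall X : 'M[R]_(N + N), cmx (S *m X *m S^T) = P *m cmx X *m P^T.
  by move=> X; rewrite /P !cmxE !map_mxM map_trmx.
have hO : cmx (Omega R N) = P *m cmx (Omega R N) *m P^T by rewrite -cE hS.
have hM' : Mlam (S *m V *m S^T) l = P *m Mlam V l *m P^T.
  by rewrite /Mlam cE {1}hO mulmxDr mulmxDl -!scalemxAr -!scalemxAl.
have hinv : invmx (P *m Mlam V l *m P^T) = invmx P^T *m invmx (Mlam V l) *m invmx P.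
  exact: invmx_conj.
rewrite hM' hinv !cE.
exact: tr_conj.
Qed.

End H.

Unset Implicit Arguments.
Theorem theorem1 (R : realType) (N : nat) (hN : (1 <= N)%N)
  (S V A B : 'M[R]_(N + N)) :
  symplectic S -> in_MN V -> symmx A -> symmx B ->
  KMB (S *m V *m S^T) (S *m A *m S^T) (S *m B *m S^T) = KMB V A B.
Proof.
move=> hS hV _ _.
rewrite /KMB.
have h : forall l : R, l \in (`[-1%R, 1%R]%classic : set R) -> 
  KMB_integrand (S *m V *m S^T) (S *m A *m S^T) (S *m B *m S^T) l =
  KMB_integrand V A B l.
  move=> l; rewrite inE /= in_itv /= => /andP[h1 h2].
  exact: (@integrand_eq R N S V A B l hS hV h1 h2).
have hre : \int[lebesgue_measure]_(l in (`[-1%R, 1%R]%classic : set R))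
      complex.Re (KMB_integrand (S *m V *m S^T) (S *m A *m S^T) (S *m B *m S^T) l)
  = \int[lebesgue_measure]_(l in (`[-1%R, 1%R]%classic : set R))
      complex.Re (KMB_integrand V A B l).
  by apply: eq_Rintegral => l hl; rewrite h.
have him : \int[lebesgue_measure]_(l in (`[-1%R, 1%R]%classic : set R))
      complex.Im (KMB_integrand (S *m V *m S^T) (S *m A *m S^T) (S *m B *m S^T) l)
  = \int[lebesgue_measure]_(l in (`[-1%R, 1%R]%classic : set R))
      complex.Im (KMB_integrand V A B l).
  by apply: eq_Rintegral => l hl; rewrite h.
exact: (congr2 (fun a b : R => a%:C%C + 'i%C * b%:C%C) hre him).
Qed.
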